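(* Let $\mathcal D\subseteq(0,1)$ be nonempty and $f:\mathcal D\to(0,1)$. If a finite automaton with $n$ states simulates $f$, then there exist polynomials $g,h\in\mathbb Z[x]$ of degree at most $n$, with $h(x)\neq0$ for all $x\in(0,1)$, such that $F=g/h$ satisfies $0<F(x)<1$ for all $x\in(0,1)$ and $F(p)=f(p)$ for all $p\in\mathcal D$.
   Context: For $w\in\{0,1\}^*$ let $n_i(w)$ be the number of $i$'s in $w$; $\mathbf P_p[w]=p^{n_1(w)}(1-p)^{n_0(w)}$, $\mathbf P_p[L]=\sum_{w\in L}\mathbf P_p[w]$. A simulation of $f:\mathcal D\to[0,1]$ is a pair of disjoint languages $L_0,L_1\subseteq\{0,1\}^*$ with $L_0\cup L_1$ prefix-free such that $\mathbf P_p[L_0\cup L_1]=1$ and $\mathbf P_p[L_1]=f(p)$ for all $p\in\mathcal D$. A finite automaton consists of finite state set $S$, start state $s_0$, transition function $\delta:S\times\{0,1\}\to S$ (extended to strings), and disjoint absorbing final-state sets $S_0,S_1$; $L_i$ is the set of strings $w$ with $\delta(s_0,w)\in S_i$ and $\delta(s_0,w')\notin S_0\cup S_1$ for every proper prefix $w'$ of $w$; the automaton simulates $f$ if $(L_0,L_1)$ is a simulation of $f$. *)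

(* Defs.v *)
From HB Require Import structures.
From mathcomp Require Import all_boot all_order all_algebra.
From mathcomp Require Import classical_sets boolp reals constructive_ereal ereal esum.
Set Implicit Arguments. Unset Strict Implicit. Unset Printing Implicit Defensive.
Import Order.TTheory GRing.Theory Num.Theory.
Local Open Scope classical_set_scope.
Local Open Scope ring_scope.

Definition n1 (w : seq bool) : nat := count (pred1 true) w.
Definition n0 (w : seq bool) : nat := count (pred1 false) w.

Definition Pw {R : realType} (p : R) (w : seq bool) : R :=
  p ^+ n1 w * (1 - p) ^+ n0 w.

Definition PL {R : realType} (p : R) (L : set (seq bool)) : \bar R :=
  \esum_(w in L) (Pw p w)%:E.

Definition prefix_free (L : set (seq bool)) : Prop :=
  forall u v, L u -> L v -> prefix u v -> u = v.

Definition simulation {R : realType} (D : set R) (f : R -> R)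
  (L0 L1 : set (seq bool)) : Prop :=
  [/\ L0 `&` L1 = set0,
      prefix_free (L0 `|` L1)
    & forall p, D p -> PL p (L0 `|` L1) = 1%E /\ PL p L1 = (f p)%:E].

Record automaton (S : finType) := Automaton {
  s0 : S;
  delta : S -> bool -> S;
  fin0 : {set S};
  fin1 : {set S};
  fin_disj : fin0 :&: fin1 = finset.set0;
  fin0_abs : forall s b, s \in fin0 -> delta s b \in fin0;
  fin1_abs : forall s b, s \in fin1 -> delta s b \in fin1 }.

Definition run (S : finType) (A : automaton S) (s : S) (w : seq bool) : S :=
  foldl (delta A) s w.

Definition auto_lang (S : finType) (A : automaton S) (Si : {set S})
  : set (seq bool) :=
  [set w | run A (s0 A) w \in Si /\
     forall k, (k < size w)%N ->
       run A (s0 A) (take k w) \notin (fin0 A :|: fin1 A)].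

Definition simulates {R : realType} (S : finType) (A : automaton S)
  (D : set R) (f : R -> R) : Prop :=
  simulation D f (auto_lang A (fin0 A)) (auto_lang A (fin1 A)).

Definition zeval {R : realType} (g : {poly int}) (x : R) : R :=
  (map_poly (fun z : int => z%:~R) g).[x].

(* Main.v *)
Require Import Defs.
From HB Require Import structures.
From mathcomp Require Import all_boot all_order all_algebra.
From mathcomp Require Import classical_sets boolp reals constructive_ereal ereal esum.
From mathcomp Require Import fsbigop cardinality fingroup perm.
From mathcomp Require Import ring lra zify.
From Stdlib Require Import Lia.
Import Order.TTheory GRing.Theory Num.Theory.
Set Implicit Arguments. Unset Strict Implicit. Unset Printing Implicit Defensive.
Local Open Scope ring_scope.

Definition finl (S : finType) (A : automaton S) (s : S) : bool :=
  s \in fin0 A :|: fin1 A.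
Definition good (S : finType) (A : automaton S) (s : S) : bool :=
  `[< ~~ finl A s /\ exists w, finl A (run A s w) >].

Lemma run_cons (S : finType) (A : automaton S) s b w :
  run A s (b :: w) = run A (delta A s b) w.
Proof. by []. Qed.

Lemma run_abs1 (S : finType) (A : automaton S) w s :
  s \in fin1 A -> run A s w \in fin1 A.
Proof. elim: w s => [//|b w IH] s Hs; rewrite run_cons; apply: IH; exact: fin1_abs. Qed.

Lemma run_abs0 (S : finType) (A : automaton S) w s :
  s \in fin0 A -> run A s w \in fin0 A.
Proof. elim: w s => [//|b w IH] s Hs; rewrite run_cons; apply: IH; exact: fin0_abs. Qed.

Lemma fin_disj' (S : finType) (A : automaton S) s :
  s \in fin0 A -> s \in fin1 A -> False.
Proof.
move=> h0 h1; have := fin_disj A; move/setP/(_ s); by rewrite inE h0 h1 inE.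
Qed.

Lemma good_nfin (S : finType) (A : automaton S) s : good A s -> ~~ finl A s.
Proof. by move/asboolP=> []. Qed.

Lemma fin_ngood (S : finType) (A : automaton S) s : finl A s -> ~~ good A s.
Proof. by move=> h; apply/negP=> /good_nfin; rewrite h. Qed.

Definition conv (R : realType) (S : finType) (A : automaton S) (x : R) (v : S -> R) :=
  forall s, good A s -> v s = x * v (delta A s true) + (1 - x) * v (delta A s false).

Lemma conv_eq (R : realType) (x c a b : R) : 0 < x < 1 -> a <= c -> b <= c ->
  c = x * a + (1 - x) * b -> a = c /\ b = c.
Proof.
move=> /andP[x0 x1] ac bc e.
have h1 : 0 <= x * (c - a) by apply: mulr_ge0; lra.
have h2 : 0 <= (1 - x) * (c - b) by apply: mulr_ge0; lra.
have h3 : x * (c - a) + (1 - x) * (c - b) = 0.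
  by rewrite e; ring.
have h4 : x * (c - a) = 0 by lra.
have h5 : (1 - x) * (c - b) = 0 by lra.
move/eqP: h4; rewrite mulf_eq0 => /orP[/eqP|/eqP]; first lra.
move/eqP: h5; rewrite mulf_eq0 => /orP[/eqP|/eqP] => ?; lra.
Qed.

Lemma prop_up (R : realType) (S : finType) (A : automaton S) (x c : R) (v : S -> R) :
  0 < x < 1 -> conv A x v -> (forall t, v t <= c) ->
  forall w s, ~~ finl A s -> finl A (run A s w) -> v s = c ->
  exists t, finl A t /\ v t = c.
Proof.
move=> hx hc hub; elim=> [|b w IH] s hs hr hv; first by rewrite /= hr in hs.
have gs : good A s by apply/asboolP; split => //; exists (b :: w).
have [e1 e0] := conv_eq hx (hub _) (hub _) (etrans (esym hv) (hc s gs)).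
have hb : v (delta A s b) = c by case: b {hr IH}.
case fb: (finl A (delta A s b)); first by exists (delta A s b).
by apply: (IH (delta A s b)) => //; rewrite fb.
Qed.

Lemma bound_up (R : realType) (S : finType) (A : automaton S) (x hi : R) (v : S -> R) :
  0 < x < 1 -> conv A x v -> (forall t, ~~ good A t -> v t <= hi) ->
  forall t, v t <= hi.
Proof.
move=> hx hc hng t.
case: (arg_maxP v (erefl true : (predT : {pred S}) t)) => m _ hm.
have hm' : forall j, v j <= v m by move=> j; exact: hm.
apply: le_trans (hm' t) _.
case gm: (good A m); last by apply: hng; rewrite gm.
move/asboolP: gm => [nf [w hw]].
have [t' [ft' <-]] := prop_up hx hc hm' nf hw (erefl _).
by apply: hng; apply: fin_ngood.
Qed.

Lemma bound_lo (R : realType) (S : finType) (A : automaton S) (x lo : R) (v : S -> R) :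
  0 < x < 1 -> conv A x v -> (forall t, ~~ good A t -> lo <= v t) ->
  forall t, lo <= v t.
Proof.
move=> hx hc hng t.
have h := @bound_up R S A x (- lo) (fun s => - v s) hx.
rewrite -lerN2; apply: h => [s gs|s gs]; last by rewrite lerN2; apply: hng.
by rewrite (hc s gs); ring.
Qed.

Definition spec (R : realType) (S : finType) (A : automaton S) (X : {set S}) (v : S -> R) :=
  forall t, ~~ good A t -> v t = (t \in X)%:R.

Lemma prop_one (R : realType) (S : finType) (A : automaton S) (x : R) (v : S -> R) :
  0 < x < 1 -> conv A x v -> (forall t, v t <= 1) -> spec A (fin1 A) v ->
  forall w s, v s = 1 -> run A s w \in fin0 A -> False.
Proof.
move=> hx hc hub hs; elim=> [|b w IH] s hv hr.
  have := hs s (fin_ngood (A := A) (s := s) _); rewrite /finl inE hr /= => /(_ isT).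
  case f1: (s \in fin1 A); first by case: (fin_disj' hr f1).
  by rewrite hv => /eqP; rewrite oner_eq0.
case f1: (s \in fin1 A); first by exact: (fin_disj' hr (run_abs1 _ f1)).
case f0: (s \in fin0 A).
  have := hs s (fin_ngood (A := A) (s := s) _); rewrite /finl inE f0 /= => /(_ isT).
  by rewrite f1 hv => /eqP; rewrite oner_eq0.
have gs : good A s.
  apply/asboolP; split; first by rewrite /finl inE f0 f1.
  by exists (b :: w); rewrite /finl inE hr.
have [e1 e0] := conv_eq hx (hub _) (hub _) (etrans (esym hv) (hc s gs)).
apply: (IH (delta A s b)) => //; by case: b {hr IH}.
Qed.

Lemma prop_zero (R : realType) (S : finType) (A : automaton S) (x : R) (v : S -> R) :
  0 < x < 1 -> conv A x v -> (forall t, 0 <= v t) -> spec A (fin1 A) v ->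
  forall w s, v s = 0 -> run A s w \in fin1 A -> False.
Proof.
move=> hx hc hlb hs.
pose v' := fun s => - v s.
have hc' : conv A x v' by move=> s gs; rewrite /v' (hc s gs); ring.
have hub : forall t, v' t <= 0 by move=> t; rewrite /v' oppr_le0.
elim=> [|b w IH] s hv hr.
  have := hs s (fin_ngood (A := A) (s := s) _); rewrite /finl inE hr orbT => /(_ isT).
  by rewrite hv => /eqP; rewrite eq_sym oner_eq0.
case f0: (s \in fin0 A); first by exact: (fin_disj' (run_abs0 _ f0) hr).
case f1: (s \in fin1 A).
  have := hs s (fin_ngood (A := A) (s := s) _); rewrite /finl inE f1 orbT => /(_ isT).
  by rewrite hv => /eqP; rewrite eq_sym oner_eq0.
have gs : good A s.
  apply/asboolP; split; first by rewrite /finl inE f0 f1.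
  by exists (b :: w); rewrite /finl inE hr orbT.
have hv' : v' s = 0 by rewrite /v' hv oppr0.
have [e1 e0] := conv_eq hx (hub _) (hub _) (etrans (esym hv') (hc' s gs)).
have hb : v (delta A s b) = 0.
  by case: b {hr IH}; [move: e1|move: e0]; rewrite /v' => /eqP; rewrite oppr_eq0 => /eqP.
exact: (IH _ hb hr).
Qed.

Definition lang (S : finType) (A : automaton S) (s : S) (X : {set S}) : set (seq bool) :=
  [set w | run A s w \in X /\
     forall k, (k < size w)%N -> run A s (take k w) \notin (fin0 A :|: fin1 A)].

Lemma lang_cons (S : finType) (A : automaton S) s X b w :
  lang A s X (b :: w) -> ~~ finl A s /\ lang A (delta A s b) X w.
Proof.
move=> [h1 h2]; split; first exact: (h2 0%N).
split => // k hk; exact: (h2 k.+1).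
Qed.

Lemma lang_nil (S : finType) (A : automaton S) s X : lang A s X [::] -> s \in X.
Proof. by case. Qed.

Lemma Pw_cons (R : realType) (p : R) b w :
  Pw p (b :: w) = (if b then p else 1 - p) * Pw p w.
Proof. by case: b; rewrite /Pw /n1 /n0 /= ?add0n ?add1n exprS; ring. Qed.

Lemma Pw_nil (R : realType) (p : R) : Pw p [::] = 1.
Proof. by rewrite /Pw /= !expr0 mulr1. Qed.

Definition head_is (b : bool) (w : seq bool) : bool :=
  if w is c :: _ then c == b else false.
Definition rsel (b : bool) (r : seq (seq bool)) := [seq behead w | w <- r & head_is b w].

Lemma split_sum (R : realType) (p : R) (r : seq (seq bool)) :
  (forall w, w \in r -> w != [::]) ->
  \sum_(w <- r) Pw p w =
    p * \sum_(w <- rsel true r) Pw p w + (1 - p) * \sum_(w <- rsel false r) Pw p w.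
Proof.
elim: r => [|w r IH] hr; first by rewrite /rsel /= !big_nil; ring.
rewrite big_cons IH; last by move=> w' hw'; apply: hr; rewrite inE hw' orbT.
have := hr w; rewrite inE eqxx => /(_ isT).
case: w {hr} => [//|c w'] _.
by case: c; rewrite /rsel /= !big_cons Pw_cons /=; ring.
Qed.

Lemma rsel_uniq b r : uniq r -> uniq (rsel b r).
Proof.
move=> ur; rewrite /rsel map_inj_in_uniq ?filter_uniq //.
move=> w1 w2; rewrite !mem_filter => /andP[h1 _] /andP[h2 _].
by case: w1 h1 => [//|c1 w1] /eqP ->; case: w2 h2 => [//|c2 w2] /eqP -> /= ->.
Qed.

Lemma rsel_mem b r w : w \in rsel b r -> (b :: w) \in r.
Proof.
move/mapP => [w0]; rewrite mem_filter => /andP[h1 h2] ->.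
by case: w0 h1 h2 => [//|c w0] /eqP ->.
Qed.

Lemma finsum_le (R : realType) (S : finType) (A : automaton S) (X : {set S})
    (p : R) (u : S -> R) :
  0 < p < 1 -> conv A p u -> spec A X u -> (forall t, 0 <= u t) ->
  (forall t, t \in X -> finl A t) ->
  forall k s r, uniq r -> (forall w, w \in r -> lang A s X w) ->
  (forall w, w \in r -> (size w < k)%N) ->
  \sum_(w <- r) Pw p w <= u s.
Proof.
move=> hp hc hs u0 hX; elim=> [|k IH] s r ur hl hk.
  by case: r ur hl hk => [|w r] _ _; [rewrite big_nil|move/(_ w); rewrite inE eqxx => /(_ isT)].
case fs: (finl A s).
  have hnil : forall w, w \in r -> w = [::].
    move=> [//|b w] /hl /lang_cons [] ; by rewrite fs.
  case: r ur hl hnil {hk} => [|w [|w' r]] ur hl hnil; first by rewrite big_nil.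
    rewrite big_cons big_nil addr0 (hnil w) ?mem_head // Pw_nil.
    have := hl w (mem_head _ _); rewrite (hnil w) ?mem_head // => /lang_nil sX.
    by rewrite (hs s) ?sX // fin_ngood.
  move: ur; rewrite /= (hnil w) ?mem_head // (hnil w'); last by rewrite inE mem_head orbT.
  by rewrite inE eqxx.


case gs: (good A s); last first.
  case: r ur hl hk => [|w r] _ hl _; first by rewrite big_nil.
  have [hw _] := hl w (mem_head _ _).
  have : good A s by apply/asboolP; split; [rewrite fs|exists w; exact: hX].
  by rewrite gs.
rewrite split_sum; last first.
  move=> [|//] /hl /lang_nil /hX; by rewrite fs.
rewrite (hc s gs).
have hb : forall b, \sum_(w <- rsel b r) Pw p w <= u (delta A s b).
  move=> b; apply: IH; first exact: rsel_uniq.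
    by move=> w /rsel_mem /hl /lang_cons [].
  by move=> w /rsel_mem /hk.
case/andP: hp => p0 p1.
apply: lerD; apply: ler_wpM2l; rewrite ?hb //; lra.
Qed.

Lemma PL_le (R : realType) (S : finType) (A : automaton S) (X : {set S})
    (p : R) (u : S -> R) :
  0 < p < 1 -> conv A p u -> spec A X u -> (forall t, 0 <= u t) ->
  (forall t, t \in X -> finl A t) ->
  forall s, (PL p (lang A s X) <= (u s)%:E)%E.
Proof.
move=> hp hc hs u0 hX s.
rewrite /PL /esum; apply: ge_ereal_sup => _ [F [finF FL] <-].
rewrite fsbig_finite // sumEFin lee_fin.
set r := finmap.enum_fset _.
apply: (finsum_le hp hc hs u0 hX (k := (\max_(w <- r) size w).+1)).
- exact: finmap.fset_uniq.
- move=> w hw; apply: FL; move: hw; rewrite /r.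
  by rewrite (in_fset_set finF) in_setE.
- by move=> w hw; rewrite ltnS; exact: (leq_bigmax_seq (P := xpredT) w hw).
Qed.
Definition Mp (S : finType) (A : automaton S) : 'M[{poly int}]_#|S| :=
  \matrix_(i, j)
   ((if good A (enum_val i) then
       ((j == enum_rank (delta A (enum_val i) false))%:R
        - (j == enum_rank (delta A (enum_val i) true))%:R) else 0 : int)%:P * 'X
    + ((j == i)%:R - (if good A (enum_val i) then
        (j == enum_rank (delta A (enum_val i) false))%:R else 0) : int)%:P).

Definition cx (R : realType) (x : R) : commr_rmorph (intr : int -> R) x :=
  fun a => mulrC _ _.
Definition ev (R : realType) (x : R) : {rmorphism {poly int} -> R} := horner_morph (cx x).

Lemma zevalE (R : realType) (x : R) g : zeval g x = ev x g.
Proof. by []. Qed.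

Definition E (R : realType) (S : finType) (A : automaton S) (x : R) := map_mx (ev x) (Mp A).

Lemma Eentry (R : realType) (S : finType) (A : automaton S) (x : R) i j :
  E A x i j = if good A (enum_val i) then
    ((j == enum_rank (delta A (enum_val i) false))%:R
        - (j == enum_rank (delta A (enum_val i) true))%:R) * x
    + ((j == i)%:R - (j == enum_rank (delta A (enum_val i) false))%:R)
    else (j == i)%:R.
Proof.
rewrite /E !mxE rmorphD rmorphM /= /ev horner_morphX !horner_morphC.
case: (good A _); rewrite ?rmorphB ?rmorph_nat ?rmorph0 ?mul0r ?add0r ?subr0 //.
Qed.

Lemma sum_ind (R : realType) n (a : 'I_n) (F : 'I_n -> R) :
  \sum_j (j == a)%:R * F j = F a.
Proof.
rewrite (bigD1 a) //= eqxx mul1r big1 ?addr0 // => j /negbTE ->; by rewrite mul0r.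
Qed.

Lemma rowE (R : realType) (S : finType) (A : automaton S) (x : R) i (w : 'I_#|S| -> R) :
  \sum_j E A x i j * w j =
  if good A (enum_val i) then
    w i - x * w (enum_rank (delta A (enum_val i) true))
        - (1 - x) * w (enum_rank (delta A (enum_val i) false))
  else w i.
Proof.
under eq_bigr do rewrite Eentry.
case: (good A _); last by rewrite sum_ind.
set a0 := enum_rank _; set a1 := enum_rank _.
have h : forall j, (((j == a0)%:R - (j == a1)%:R) * x + ((j == i)%:R - (j == a0)%:R)) * w j
  = x * ((j == a0)%:R * w j) - x * ((j == a1)%:R * w j) + (j == i)%:R * w j
    - (j == a0)%:R * w j :> R by move=> j; ring.
rewrite (eq_bigr _ (fun j _ => h j)) sumrB big_split sumrB /= -!mulr_sumr !sum_ind.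
ring.
Qed.

Lemma E_unit (R : realType) (S : finType) (A : automaton S) (x : R) :
  0 < x < 1 -> E A x \in unitmx.
Proof.
move=> hx; rewrite unitmxE unitfE -det_tr; apply/negP => /det0P [v vn0 hv].
have hrow : forall i, \sum_j E A x i j * v 0 j = 0.
  move=> i; move/matrixP: hv => /(_ 0 i); rewrite !mxE => hv'; rewrite -[RHS]hv'.
  by apply: eq_bigr => j _; rewrite [RHS]mulrC !mxE.
pose vf := fun t => v 0 (enum_rank t).
have hc : conv A x vf.
  move=> t gt; have := hrow (enum_rank t); rewrite rowE enum_rankK gt /vf.
  move=> h; lra.
have hng : forall t, ~~ good A t -> vf t = 0.
  move=> t gt; have := hrow (enum_rank t); rewrite rowE enum_rankK (negbTE gt) //.
have z : forall t, vf t = 0.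
  move=> t; apply/eqP; rewrite eq_le; apply/andP; split.
    by apply: (bound_up hx hc) => s /hng ->.
  by apply: (bound_lo hx hc) => s /hng ->.
move/eqP: vn0; apply; apply/rowP => j; rewrite mxE.
by have := z (enum_val j); rewrite /vf enum_valK.
Qed.

Definition bX (S : finType) (X : {set S}) : 'cV[{poly int}]_#|S| :=
  \col_i ((enum_val i \in X)%:R).

Definition uf (R : realType) (S : finType) (A : automaton S) (X : {set S}) (x : R) (t : S) : R :=
  (invmx (E A x) *m map_mx (ev x) (bX X)) (enum_rank t) 0.

Lemma uf_sol (R : realType) (S : finType) (A : automaton S) (X : {set S}) (x : R) :
  0 < x < 1 -> (forall t, t \in X -> finl A t) ->
  conv A x (uf A X x) /\ spec A X (uf A X x).
Proof.
move=> hx hX.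
have hm := mulKVmx (E_unit A hx) (map_mx (ev x) (bX X)).
have hrow : forall i, \sum_j E A x i j * (invmx (E A x) *m map_mx (ev x) (bX X)) j 0
   = (enum_val i \in X)%:R.
  move=> i; move/matrixP: hm => /(_ i 0); rewrite !mxE rmorph_nat => <-.
  by apply: eq_bigr => j _; rewrite !mxE.
split.
  move=> t gt; have := hrow (enum_rank t); rewrite rowE enum_rankK gt /uf.
  have : t \notin X by apply/negP => /hX; apply/negP; exact: good_nfin.
  move/negbTE => ->; rewrite (_ : false%:R = 0 :> R) // => h; lra.
move=> t gt; have := hrow (enum_rank t); rewrite rowE enum_rankK (negbTE gt) //.
Qed.

Definition hpoly (S : finType) (A : automaton S) : {poly int} := \det (Mp A).
Definition gpoly (S : finType) (A : automaton S) : {poly int} :=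
  \sum_(j | enum_val j \in fin1 A) (\adj (Mp A)) (enum_rank (s0 A)) j.

Lemma hpolyE (R : realType) (S : finType) (A : automaton S) (x : R) :
  zeval (hpoly A) x = \det (E A x).
Proof. by rewrite zevalE /hpoly /E det_map_mx. Qed.

Lemma F_val (R : realType) (S : finType) (A : automaton S) (x : R) :
  0 < x < 1 -> uf A (fin1 A) x (s0 A) = zeval (gpoly A) x / zeval (hpoly A) x.
Proof.
move=> hx; rewrite hpolyE /uf /invmx (E_unit A hx) -scalemxAl !mxE mulrC.
congr (_ * _).
rewrite zevalE /gpoly rmorph_sum /E -map_mx_adj [RHS]big_mkcond /=.
apply: eq_bigr => j _; rewrite !mxE rmorph_nat.
by case: (enum_val j \in fin1 A); rewrite ?mulr1 ?mulr0.
Qed.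

Lemma size_det_le m (M : 'M[{poly int}]_m) :
  (forall i j, (size (M i j) <= 2)%N) -> (size (\det M) <= m.+1)%N.
Proof.
move=> hM; apply: leq_trans (size_sum _ _ _) _.
apply/bigmax_leqP => s _.
have hs : (\sum_(i | predT i) size (M i (s i)) <= \sum_(i < m) 2)%N
  by (apply: leq_sum => i _; exact: hM).
rewrite sum_nat_const card_ord in hs.
have hp := size_poly_prod_leq predT (fun i => M i (s i)).
rewrite cardE size_enum_ord in hp.
have hp' : (size (\prod_i M i (s i))%R <= m.+1)%N.
  apply: leq_trans hp _. lia.
rewrite mulr_sign; case: (odd_perm s); by rewrite ?size_polyN.
Qed.

Lemma Mp_size (S : finType) (A : automaton S) i j : (size (Mp A i j) <= 2)%N.
Proof.
rewrite mxE size_MXaddC; case: ifP => // _.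
by apply: leq_trans (size_polyC_leq1 _) _.
Qed.

Lemma hpoly_size (S : finType) (A : automaton S) : (size (hpoly A) <= #|S|.+1)%N.
Proof. exact: size_det_le (@Mp_size S A). Qed.

Lemma gpoly_size (S : finType) (A : automaton S) : (size (gpoly A) <= #|S|.+1)%N.
Proof.
apply: leq_trans (size_sum _ _ _) _; apply/bigmax_leqP => j _.
rewrite mxE /cofactor -signr_odd mulr_sign.
have hd := size_det_le (M := row' j (col' (enum_rank (s0 A)) (Mp A))) _.
have hd' : (size (\det (row' j (col' (enum_rank (s0 A)) (Mp A)))) <= #|S|.+1)%N.
  apply: leq_trans (hd _) _; last by rewrite ltnS leq_pred.
  move=> a b; rewrite !mxE size_MXaddC; case: ifP => // _.
  by apply: leq_trans (size_polyC_leq1 _) _.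
by case: odd; rewrite ?size_polyN.
Qed.

Unset Implicit Arguments.
Local Open Scope classical_set_scope.
Local Open Scope ring_scope.

Theorem proposition2p3 (R : realType) (D : set R) (f : R -> R)
  (S : finType) (A : automaton S) :
  D !=set0 ->
  (forall p, D p -> 0 < p < 1) ->
  (forall p, D p -> 0 < f p < 1) ->
  simulates A D f ->
  exists g h : {poly int},
    [/\ (size g <= #|S|.+1)%N, (size h <= #|S|.+1)%N,
        (forall x : R, 0 < x < 1 -> zeval h x != 0),
        (forall x : R, 0 < x < 1 -> 0 < zeval g x / zeval h x < 1)
      & (forall p, D p -> zeval g p / zeval h p = f p)].
Proof.
move=> [p0 Dp0] hD hf [hdisj _ hsimp].
have h1X : forall t, t \in fin1 A -> finl A t by move=> t ht; rewrite /finl inE ht orbT.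
have h0X : forall t, t \in fin0 A -> finl A t by move=> t ht; rewrite /finl inE ht.
have hbit : forall (b : bool), 0 <= (b%:R : R) <= 1.
  by case; rewrite ?ler01 ?lexx.
have [w1 hw1] : exists w, run A (s0 A) w \in fin1 A.
  case: (pselect (exists w, run A (s0 A) w \in fin1 A)) => // nw.
  have e : auto_lang A (fin1 A) = set0.
    by apply/seteqP; split => [w [hw _]|//]; exfalso; apply: nw; exists w.
  have [_ e1] := hsimp p0 Dp0; rewrite e /PL esum_set0 in e1.
  case: e1 => e1; have := hf p0 Dp0; rewrite -e1; lra.
have [w0 hw0] : exists w, run A (s0 A) w \in fin0 A.
  case: (pselect (exists w, run A (s0 A) w \in fin0 A)) => // nw.
  have e : auto_lang A (fin0 A) = set0.
    by apply/seteqP; split => [w [hw _]|//]; exfalso; apply: nw; exists w.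
  have [e0 e1] := hsimp p0 Dp0; rewrite e set0U e1 in e0.
  case: e0 => e0; have := hf p0 Dp0; rewrite e0; lra.
have hbnd : forall x : R, 0 < x < 1 -> forall X : {set S}, (forall t, t \in X -> finl A t) ->
    forall t, 0 <= uf A X x t <= 1.
  move=> x hx X hX t; have [hc hs] := @uf_sol R S A X x hx hX.
  apply/andP; split.
    by apply: (bound_lo hx hc) => s gs; rewrite hs //; case/andP: (hbit (s \in X)).
  by apply: (bound_up hx hc) => s gs; rewrite hs //; case/andP: (hbit (s \in X)).
exists (gpoly A), (hpoly A); split.
- exact: gpoly_size.
- exact: hpoly_size.
- move=> x hx; rewrite hpolyE; have := E_unit A hx; by rewrite unitmxE unitfE.
- move=> x hx; rewrite -F_val //.
  have [hc hs] := @uf_sol R S A (fin1 A) x hx h1X.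
  have hlb : forall t, 0 <= uf A (fin1 A) x t by move=> t; case/andP: (hbnd x hx _ h1X t).
  have hub : forall t, uf A (fin1 A) x t <= 1 by move=> t; case/andP: (hbnd x hx _ h1X t).
  apply/andP; split.
    rewrite lt_neqAle hlb andbT; apply/eqP => e.
    exact: (prop_zero hx hc hlb hs (esym e) hw1).
  rewrite lt_neqAle hub andbT; apply/eqP => e.
  exact: (prop_one hx hc hub hs e hw0).
- move=> p Dp; have hp := hD p Dp; rewrite -F_val //.
  have [hc1 hs1] := @uf_sol R S A (fin1 A) p hp h1X.
  have [hc0 hs0] := @uf_sol R S A (fin0 A) p hp h0X.
  have l1 : forall t, 0 <= uf A (fin1 A) p t by move=> t; case/andP: (hbnd p hp _ h1X t).
  have l0 : forall t, 0 <= uf A (fin0 A) p t by move=> t; case/andP: (hbnd p hp _ h0X t).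
  have P1 := PL_le hp hc1 hs1 l1 h1X (s0 A).
  have P0 := PL_le hp hc0 hs0 l0 h0X (s0 A).
  pose wv := fun t => uf A (fin0 A) p t + uf A (fin1 A) p t.
  have hcw : conv A p wv by move=> t gt; rewrite /wv hc0 // hc1 //; ring.
  have hw : wv (s0 A) <= 1.
    apply: (bound_up hp hcw) => t gt; rewrite /wv hs0 // hs1 //.
    case f0: (t \in fin0 A); case f1: (t \in fin1 A) => /=; rewrite ?add0r ?addr0 ?lexx ?ler01 //.
    by case: (fin_disj' f0 f1).
  have [e01 e1] := hsimp p Dp.
  set L0 := auto_lang A (fin0 A) in e01 P0 *.
  set L1 := auto_lang A (fin1 A) in e01 e1 P1 *.
  have hd : forall w, L0 w -> L1 w -> False.
    move=> w a b; have : (L0 `&` L1) w by split.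
    by rewrite hdisj.
  rewrite /PL (esumID L0) in e01; last by move=> w _; rewrite lee_fin; apply: mulr_ge0;
    apply: exprn_ge0; case/andP: hp => ? ?; lra.
  have eA : (L0 `|` L1) `&` L0 = L0.
    by apply/seteqP; split => w; [case|move=> h; split => //; left].
  have eB : (L0 `|` L1) `&` ~` L0 = L1.
    apply/seteqP; split => w; first by case => -[h|h] hn //.
    by move=> h; split; [right|move=> h0; exact: hd h0 h].
  rewrite eA eB -/(PL p L0) -/(PL p L1) e1 in e01.
  have h1 : (1%:E <= (uf A (fin0 A) p (s0 A))%:E + (f p)%:E)%E.
    by rewrite -e01; apply: leeD2r.
  rewrite -EFinD lee_fin in h1.
  rewrite e1 lee_fin in P1.
  move: hw; rewrite /wv => hw; lra.
Qed.
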